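(* Let $\mathcal X,\mathcal U$ be finite nonempty sets, $f:\mathcal X\times\mathcal U\to\mathcal X$ and $\ell,g:\mathcal X\to\mathbb R$, and let $$v_{\mathrm{RAA}}^*(x)=\max_{\mathbf u\in\mathbb U}\min\Big\{\max_{\tau\in\mathbb N}\ell(\xi_x^{\mathbf u}(\tau)),\min_{\kappa\in\mathbb N}g(\xi_x^{\mathbf u}(\kappa))\Big\}.$$ Then there is an augmented policy $\bar\pi\in\overline\Pi$ such that for all $x\in\mathcal X$, $$v_{\mathrm{RAA}}^*(x)=\min\Big\{\max_{\tau\in\mathbb N}\ell(\bar\xi_x^{\bar\pi}(\tau)),\min_{\tau\in\mathbb N}g(\bar\xi_x^{\bar\pi}(\tau))\Big\}.$$
   Context: $\mathbb N=\{0,1,\dots\}$; $\mathbb U$ is the set of sequences $\mathbb N\to\mathcal U$; for $\mathbf u\in\mathbb U$: $\xi_x^{\mathbf u}(0)=x$, $\xi_x^{\mathbf u}(t+1)=f(\xi_x^{\mathbf u}(t),\mathbf u(t))$. Let $\mathcal Y=\{\ell(x):x\in\mathcal X\}$, $\mathcal Z=\{g(x):x\in\mathcal X\}$ and $\overline\Pi$ the set of maps $\bar\pi:\mathcal X\times\mathcal Y\times\mathcal Z\to\mathcal U$. For $\bar\pi\in\overline\Pi$, define $\bar\xi_x^{\bar\pi}(0)=x$, $\bar y_x^{\bar\pi}(0)=\ell(x)$, $\bar z_x^{\bar\pi}(0)=g(x)$, $\bar\xi_x^{\bar\pi}(t+1)=f\big(\bar\xi_x^{\bar\pi}(t),\bar\pi(\bar\xi_x^{\bar\pi}(t),\bar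 y_x^{\bar\pi}(t),\bar z_x^{\bar\pi}(t))\big)$, $\bar y_x^{\bar\pi}(t+1)=\max\{\ell(\bar\xi_x^{\bar\pi}(t+1)),\bar y_x^{\bar\pi}(t)\}$, $\bar z_x^{\bar\pi}(t+1)=\min\{g(\bar\xi_x^{\bar\pi}(t+1)),\bar z_x^{\bar\pi}(t)\}$. *)

(* Defs.v *)
From HB Require Import structures.
From mathcomp Require Import all_boot all_order all_algebra.
From mathcomp Require Import all_classical all_reals.
Set Implicit Arguments. Unset Strict Implicit. Unset Printing Implicit Defensive.
Import Order.TTheory GRing.Theory Num.Theory.
Local Open Scope ring_scope.
Local Open Scope classical_set_scope.

Section RAA.
Variables (R : realType) (X U : finType) (f : X -> U -> X) (l g : X -> R).

Fixpoint traj (x : X) (u : nat -> U) (t : nat) : X :=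
  match t with
  | 0 => x
  | t'.+1 => f (traj x u t') (u t')
  end.

(* max over tau of l(xi(tau)) -- attained since X is finite; sup = max *)
Definition maxl (xi : nat -> X) : R := sup (range (fun t => l (xi t))).
(* min over kappa of g(xi(kappa)) -- attained; inf = min *)
Definition ming (xi : nat -> X) : R := inf (range (fun t => g (xi t))).

(* v*_RAA(x) = max over u in U^N of min{max l, min g}; attained (finitely many values) *)
Definition vRAA (x : X) : R :=
  sup (range (fun u : nat -> U => Num.min (maxl (traj x u)) (ming (traj x u)))).

Fixpoint aug_traj (pib : X -> R -> R -> U) (x : X) (t : nat) : X * R * R :=
  match t with
  | 0 => (x, l x, g x)
  | t'.+1 =>
      let: (xt, yt, zt) := aug_traj pib x t' in
      let xn := f xt (pib xt yt zt) in
      (xn, Num.max (l xn) yt, Num.min (g xn) zt)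
  end.

Definition aug_xi (pib : X -> R -> R -> U) (x : X) (t : nat) : X :=
  (aug_traj pib x t).1.1.

End RAA.

(* Main.v *)
Require Import Defs.
From HB Require Import structures.
From mathcomp Require Import all_boot all_order all_algebra.
From mathcomp Require Import all_classical all_reals.
Import Order.TTheory GRing.Theory Num.Theory.
Local Open Scope ring_scope.
Local Open Scope classical_set_scope.

Lemma sup_att (R : realType) (T : finType) (h : T -> R) (A : set R) :
  A !=set0 -> A `<=` range h -> exists a, A a /\ sup A = a /\ (forall b, A b -> b <= a).
Proof.
move=> [a0 Aa0] sub.
have [i0 _ hi0] := sub _ Aa0.
pose P := fun i => `[< A (h i) >].
have Pi0 : P i0 by rewrite /P asboolE hi0.
case: (arg_maxP h Pi0) => i /asboolP Ai imax.
have ub : forall b, A b -> b <= h i.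
  move=> b Ab; have [j _ hj] := sub _ Ab; rewrite -hj; apply: imax; by apply/asboolP; rewrite hj.
exists (h i); split => //; split => //.
apply/le_anti/andP; split; first by apply: ge_sup => //; exists a0.
by apply: ub_le_sup => //; exists (h i).
Qed.

Lemma inf_att (R : realType) (T : finType) (h : T -> R) (A : set R) :
  A !=set0 -> A `<=` range h -> exists a, A a /\ inf A = a /\ (forall b, A b -> a <= b).
Proof.
move=> [a0 Aa0] sub.
have ne : [set - x | x in A] !=set0 by exists (- a0), a0.
have sb : [set - x | x in A] `<=` range (fun t => - h t).
  move=> _ [b Ab <-]; have [t _ <-] := sub _ Ab; by exists t.
have [a [[b Ab <-] [e ub]]] := @sup_att R T (fun t => - h t) _ ne sb.
exists b; split => //; split; first by rewrite /inf e opprK.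
move=> c Ac; rewrite -lerN2; apply: ub; by exists c.
Qed.

Section S.
Variables (R : realType) (X U : finType) (f : X -> U -> X) (l g : X -> R) (u0 : U).

Lemma maxl_att (xi : nat -> X) : exists t, maxl l xi = l (xi t) /\ forall t', l (xi t') <= maxl l xi.
Proof.
have ne : range (fun t => l (xi t)) !=set0 by exists (l (xi 0%N)), 0%N.
have sb : range (fun t => l (xi t)) `<=` range l by move=> _ [t _ <-]; exists (xi t).
have [a [[t _ <-] [e ub]]] := @sup_att R X l _ ne sb.
exists t; rewrite /maxl e; split => // t'; apply: ub; by exists t'.
Qed.

Lemma ming_att (xi : nat -> X) : exists t, ming g xi = g (xi t) /\ forall t', ming g xi <= g (xi t').
Proof.
have ne : range (fun t => g (xi t)) !=set0 by exists (g (xi 0%N)), 0%N.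
have sb : range (fun t => g (xi t)) `<=` range g by move=> _ [t _ <-]; exists (xi t).
have [a [[t _ <-] [e ub]]] := @inf_att R X g _ ne sb.
exists t; rewrite /ming e; split => // t'; apply: ub; by exists t'.
Qed.

Definition J x y z (u : nat -> U) : R :=
  Num.min (Num.max y (maxl l (traj f x u))) (Num.min z (ming g (traj f x u))).
Definition V x y z := sup (range (J x y z)).

Lemma V_att x y z : exists u, J x y z u = V x y z /\ forall u', J x y z u' <= V x y z.
Proof.
pose h (s : (X + X) + bool) : R := match s with inl (inl a) => l a | inl (inr a) => g a
   | inr true => y | inr false => z end.
have ne : range (J x y z) !=set0 by exists (J x y z (fun _ => u0)), (fun _ => u0).
have sb : range (J x y z) `<=` range h.
  move=> _ [u _ <-].
  have [t [Mt _]] := maxl_att (traj f x u).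
  have [k [mk _]] := ming_att (traj f x u).
  rewrite /J Mt mk.
  case: (leP y (l (traj f x u t))) => _; case: (leP z (g (traj f x u k))) => _; case: leP => _.
  all: try (exists (inr true); [exact I|reflexivity]).
  all: try (exists (inr false); [exact I|reflexivity]).
  all: try (exists (inl (inl (traj f x u t))); [exact I|reflexivity]).
  all: try (exists (inl (inr (traj f x u k))); [exact I|reflexivity]).
have [a [[u _ <-] [e ub]]] := @sup_att R _ h _ ne sb.
exists u; rewrite /V e; split => // u'; apply: ub; by exists u'.
Qed.

Lemma V_le_z x y z : V x y z <= z.
Proof.
have [u [<- _]] := V_att x y z.
by rewrite /J !ge_min lexx !orbT.
Qed.

Definition cns (a : U) (u : nat -> U) : nat -> U := fun n => if n is k.+1 then u k else a.
Definition sh (u : nat -> U) : nat -> U := fun n => u n.+1.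

Lemma cns_sh u : cns (u 0%N) (sh u) = u.
Proof. by apply: funext => -[|n]. Qed.

Lemma traj_cns x a u k : traj f x (cns a u) k.+1 = traj f (f x a) u k.
Proof.
elim: k => [|k IH] //.
transitivity (f (traj f x (cns a u) k.+1) (u k)); first by [].
by rewrite IH.
Qed.

Lemma maxl_cns x a u :
  maxl l (traj f x (cns a u)) = Num.max (l x) (maxl l (traj f (f x a) u)).
Proof.
have [t [e1 ub1]] := maxl_att (traj f x (cns a u)).
have [k [e2 ub2]] := maxl_att (traj f (f x a) u).
apply/le_anti/andP; split.
- rewrite e1; case: t {e1} => [|t]; first by rewrite le_max lexx.
  by rewrite traj_cns le_max ub2 orbT.
- rewrite ge_max; apply/andP; split; first exact: (ub1 0%N).
  by rewrite e2 -traj_cns.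
Qed.

Lemma ming_cns x a u :
  ming g (traj f x (cns a u)) = Num.min (g x) (ming g (traj f (f x a) u)).
Proof.
have [t [e1 ub1]] := ming_att (traj f x (cns a u)).
have [k [e2 ub2]] := ming_att (traj f (f x a) u).
apply/le_anti/andP; split.
- rewrite le_min; apply/andP; split; first exact: (ub1 0%N).
  by rewrite e2 -traj_cns.
- rewrite e1; case: t {e1} => [|t]; first by rewrite ge_min lexx.
  by rewrite traj_cns ge_min ub2 orbT.
Qed.

Lemma J_cns x y z a u : l x <= y -> z <= g x ->
  J x y z (cns a u) = J (f x a) (Num.max (l (f x a)) y) (Num.min (g (f x a)) z) u.
Proof.
move=> hl hg; rewrite /J maxl_cns ming_cns.
have [? [_ ub]] := maxl_att (traj f (f x a) u).
have [? [_ lb]] := ming_att (traj f (f x a) u).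
have h1 := ub 0%N; have h2 := lb 0%N; rewrite /= in h1 h2.
congr Num.min.
- by rewrite maxA (max_l hl) [Num.max (l _) y]maxC -maxA (max_r h1).
- by rewrite minA (min_l hg) [Num.min (g _) z]minC -minA (min_r h2).
Qed.


Lemma V_step x y z u : l x <= y -> z <= g x -> J x y z u = V x y z ->
  V (f x (u 0%N)) (Num.max (l (f x (u 0%N))) y) (Num.min (g (f x (u 0%N))) z) = V x y z /\
  J (f x (u 0%N)) (Num.max (l (f x (u 0%N))) y) (Num.min (g (f x (u 0%N))) z) (sh u) = V x y z.
Proof.
move=> hl hg Ju; set x1 := f x (u 0%N).
have e : J x1 (Num.max (l x1) y) (Num.min (g x1) z) (sh u) = V x y z.
  by rewrite -J_cns // cns_sh.
split => //.
apply/le_anti/andP; split.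
- have [u1 [<- _]] := V_att x1 (Num.max (l x1) y) (Num.min (g x1) z).
  rewrite -J_cns //; have [? [_ ub]] := V_att x y z; exact: ub.
- rewrite -e; have [? [_ ub]] := V_att x1 (Num.max (l x1) y) (Num.min (g x1) z); exact: ub.
Qed.

Definition cond x y z (u : nat -> U) (n : nat) : Prop :=
  V x y z <= y \/ exists i, (0 < i <= n)%N /\ V x y z <= l (traj f x u i).

Definition Good x y z (p : (nat -> U) * nat) : Prop :=
  J x y z p.1 = V x y z /\ cond x y z p.1 p.2 /\
  forall u' m, J x y z u' = V x y z -> cond x y z u' m -> (p.2 <= m)%N.

Lemma ex_min (P : nat -> Prop) : (exists n, P n) -> exists n, P n /\ forall m, P m -> (n <= m)%N.
Proof.
move=> [n Pn]; elim/ltn_ind: n Pn => n IH Pn.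
case: (pselect (exists m, P m /\ (m < n)%N)) => [[m [Pm lt]]|nex]; first exact: IH m lt Pm.
exists n; split => // m Pm; rewrite leqNgt; apply/negP => lt; apply: nex; by exists m.
Qed.

Lemma good_ex x y z : l x <= y -> exists p, Good x y z p.
Proof.
move=> hl.
have [u [Ju _]] := V_att x y z.
have : exists m, exists u', J x y z u' = V x y z /\ cond x y z u' m.
  case: (lerP (V x y z) y) => hy; first by exists 0%N, u; split => //; left.
  have [t [Mt _]] := maxl_att (traj f x u).
  exists t, u; split => //; right; exists t.
  have hV : V x y z <= l (traj f x u t).
    have : V x y z <= Num.max y (maxl l (traj f x u)).
      by rewrite -{1}Ju /J ge_min lexx.
    rewrite le_max Mt => /orP [h|//].
    by move: (lt_le_trans hy h); rewrite ltxx.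
  split => //; rewrite leqnn andbT lt0n; apply/negP => /eqP t0.
  move: hV; rewrite t0 /= => hV.
  by move: (lt_le_trans hy (le_trans hV hl)); rewrite ltxx.
move=> /ex_min [m [[u' [J' c']] mn]].
exists (u', m); split => //; split => // u'' m'' J'' c''; apply: mn; by exists u''.
Qed.

Definition chp x y z : (nat -> U) * nat :=
  match pselect (exists p, Good x y z p) with
  | left H => projT1 (cid H)
  | right _ => (fun _ => u0, 0%N) end.

Lemma chp_good x y z : l x <= y -> Good x y z (chp x y z).
Proof.
move=> hl; rewrite /chp; case: pselect => [H|H]; first exact: (projT2 (cid H)).
by exfalso; apply: H; exact: good_ex.
Qed.

Definition pib x y z : U := (chp x y z).1 0%N.

End S.
Arguments J {R X U}. Arguments V {R X U}. Arguments cond {R X U}. Arguments Good {R X U}.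
Arguments chp {R X U}. Arguments chp_good {R X U}. Arguments pib {R X U}.
Arguments V_att {R X U}. Arguments V_step {R X U}. Arguments V_le_z {R X U}.
Arguments maxl_att {R X}. Arguments ming_att {R X}.
Arguments sh {U}. Arguments cns {U}. Arguments cns_sh {U}. Arguments traj_cns {X U}.

Theorem mainTheorem9 (R : realType) (X U : finType) (f : X -> U -> X) (l g : X -> R) :
  (0 < #|X|)%N -> (0 < #|U|)%N ->
  exists pib : X -> R -> R -> U,
    forall x : X,
      vRAA f l g x =
      Num.min (maxl l (aug_xi f l g pib x)) (ming g (aug_xi f l g pib x)).
Proof.
move=> _ /card_gt0P [u0 _].
exists (pib f l g u0) => x.
set pb := pib f l g u0.
pose s t := aug_traj f l g pb x t.
pose xs t := (s t).1.1. pose ys t := (s t).1.2. pose zs t := (s t).2.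
have sS : forall t, s t.+1 = (f (xs t) (pb (xs t) (ys t) (zs t)),
    Num.max (l (f (xs t) (pb (xs t) (ys t) (zs t)))) (ys t),
    Num.min (g (f (xs t) (pb (xs t) (ys t) (zs t)))) (zs t)).
  move=> t; rewrite /xs /ys /zs /s /=; by case: (aug_traj f l g pb x t) => [[a b] c].
have xsS t : xs t.+1 = f (xs t) (pb (xs t) (ys t) (zs t)) by rewrite /xs sS.
have ysS t : ys t.+1 = Num.max (l (xs t.+1)) (ys t) by rewrite xsS /ys sS.
have zsS t : zs t.+1 = Num.min (g (xs t.+1)) (zs t) by rewrite xsS /zs sS.
have inv t : l (xs t) <= ys t /\ zs t <= g (xs t).
  case: t => [|t]; first by rewrite /xs /ys /zs /= !lexx.
  by rewrite ysS zsS le_max ge_min !lexx.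
pose ch t := chp f l g u0 (xs t) (ys t) (zs t).
have Gd t : Good f l g (xs t) (ys t) (zs t) (ch t) := chp_good f l g u0 _ _ _ (inv t).1.
have pbE t : pb (xs t) (ys t) (zs t) = (ch t).1 0%N by [].
pose V0 := V f l g x (l x) (g x).
have Vc : forall t, V f l g (xs t) (ys t) (zs t) = V0.
  elim => [//|t IH].
  have [Ju _] := Gd t.
  have [e1 _] := V_step _ _ _ u0 _ _ _ _ (inv t).1 (inv t).2 Ju.
  by rewrite ysS zsS xsS pbE e1.
pose n t := (ch t).2.
have dec t : ys t < V0 -> (n t.+1 < n t)%N.
  move=> hy.
  have [Ju [c _]] := Gd t.
  case: c => [h|[i [hi hV]]].
    by move: h; rewrite Vc => h; move: (lt_le_trans hy h); rewrite ltxx.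
  have [_ [_ mn]] := Gd t.+1.
  have [e1 e2] := V_step _ _ _ u0 _ _ _ _ (inv t).1 (inv t).2 Ju.
  set u := (ch t).1 in e1 e2 hV.
  have : (n t.+1 <= (n t).-1)%N.
    have mm := mn (sh u) (n t).-1; apply: mm.
    - by rewrite ysS zsS xsS pbE e1 e2.
    - case: i hi hV => [//|[|k]] hi hV.
      + left; rewrite (Vc t.+1) -(Vc t); apply: (le_trans hV).
        by rewrite ysS le_max xsS pbE lexx.
      + right; exists k.+1; split; first by move: hi; rewrite /n; case: (ch t).2.
        rewrite (Vc t.+1) -(Vc t); apply: (le_trans hV).
        by rewrite -{1}(cns_sh u) traj_cns xsS pbE.
  move: hi => /andP [i0 hi] h; apply: (leq_ltn_trans h).
  by rewrite ltn_predL (leq_trans i0 hi).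
have exT : exists T, V0 <= ys T.
  case: (pselect (exists T, V0 <= ys T)) => [//|nx].
  have all t : ys t < V0 by rewrite ltNge; apply/negP => h; apply: nx; exists t.
  have bd : forall t, (n t + t <= n 0%N)%N.
    elim => [|t IH]; first by rewrite addn0.
    rewrite addnS; apply: leq_trans IH; by rewrite ltn_add2r dec.
  by have := bd (n 0%N).+1; rewrite addnS ltnNge leq_addl.
have ysl t : exists i, ys t = l (xs i).
  elim: t => [|t [i IH]]; first by exists 0%N.
  rewrite ysS; case: (leP (l (xs t.+1)) (ys t)) => _; [by exists i | by exists t.+1].
pose w t := pb (xs t) (ys t) (zs t).
have trw : traj f x w = xs.
  apply: funext => t; elim: t => [//|t IH].
  by rewrite [LHS]/= IH xsS.
have J0 u : J f l g x (l x) (g x) u = Num.min (maxl l (traj f x u)) (ming g (traj f x u)).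
  have [? [_ ub]] := maxl_att l (traj f x u).
  have [? [_ lb]] := ming_att g (traj f x u).
  by rewrite /J (max_r (ub 0%N)) (min_r (lb 0%N)).
have vV : vRAA f l g x = V0.
  rewrite /vRAA /V0 /V (_ : J f l g x (l x) (g x) = fun u => Num.min (maxl l (traj f x u)) (ming g (traj f x u))) //.
  apply: funext => u; exact: J0.
have -> : aug_xi f l g pb x = xs by [].
rewrite vV; apply/le_anti/andP; split.
- rewrite le_min; apply/andP; split.
  + have [T hT] := exT; have [i hi] := ysl T; have [? [_ ub]] := maxl_att l xs.
    apply: (le_trans hT); rewrite hi; exact: ub.
  + have [k [-> _]] := ming_att g xs; rewrite -(Vc k).
    exact: (le_trans (V_le_z _ _ _ u0 _ _ _) (inv k).2).
- have [? [_ ub]] := V_att f l g u0 x (l x) (g x).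
  rewrite -trw -J0; exact: ub.
Qed.
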